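(* Let $\Gamma=(V,E)$ be a connected graph of valency at least $3$, $G\leqslant\mathrm{Aut}(\Gamma)$, and assume $\Gamma$ is $(G,2)$-arc-transitive. Let $G^*=\langle G_{\alpha_1},G_{\alpha_2}\rangle$ for some $\{\alpha_1,\alpha_2\}\in E$ and $M=\mathrm{soc}(G^* )$, and assume $G^*$ is a quasiprimitive group of PA type on each of its orbits on $V$, so that $M=T_1\times\cdots\times T_n$ is the unique minimal normal subgroup of $G^*$, with $n\geqslant2$ and the $T_i$ pairwise isomorphic nonabelian simple groups, and for each $\alpha\in V$ there are subgroups $R_i<T_i$ with $M_\alpha\leqslant R_1\times\cdots\times R_n$ such that every projection $\pi_i:M_\alpha\to R_i$ is surjective. Assume $\Gamma$ is $M$-locally primitive. Then every $\pi_i$ is injective; in particular, $M_\alpha\cong R_i$ for all $i$.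
   Context: Graphs are finite, simple and undirected; $G_\alpha$ is a vertex stabilizer and $\Gamma(\alpha)$ the neighbourhood of $\alpha$. A $2$-arc is a triple $(\alpha,\beta,\gamma)$ of distinct vertices with $\{\alpha,\beta\},\{\beta,\gamma\}\in E$, and $(G,2)$-arc-transitive means $G$ is transitive on $2$-arcs. A permutation group is quasiprimitive if each minimal normal subgroup is transitive. $\mathrm{soc}(X)$ is the subgroup generated by all minimal normal subgroups of $X$. $\Gamma$ is $M$-locally primitive if $M_\gamma$ acts primitively on $\Gamma(\gamma)$ for every vertex $\gamma$. *)

(* Defs.v *)
From mathcomp Require Import all_boot all_fingroup all_solvable.
Set Implicit Arguments. Unset Strict Implicit. Unset Printing Implicit Defensive.
Local Open Scope group_scope.

Section Defs.
Variable V : finType.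

Definition simple_graph (adj : rel V) :=
  symmetric adj /\ irreflexive adj.

Definition neighbourhood (adj : rel V) (a : V) : {set V} := [set b | adj a b].

Definition connected_graph (adj : rel V) := forall a b : V, connect adj a b.

Definition valency_ge (adj : rel V) (k : nat) := forall a : V, k <= #|neighbourhood adj a|.

Definition automorphisms (adj : rel V) (G : {set {perm V}}) :=
  forall g, g \in G -> forall a b : V, adj (g a) (g b) = adj a b.

Definition two_arc (adj : rel V) (t : V * V * V) :=
  [/\ adj t.1.1 t.1.2, adj t.1.2 t.2, t.1.1 != t.1.2, t.1.2 != t.2 & t.1.1 != t.2].

Definition two_arc_transitive (adj : rel V) (G : {set {perm V}}) :=
  forall s t, two_arc adj s -> two_arc adj t ->
    exists2 g, g \in G &
      [/\ g s.1.1 = t.1.1, g s.1.2 = t.1.2 & g s.2 = t.2].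

Definition locally_primitive (adj : rel V) (M : {set {perm V}}) :=
  forall c : V, [primitive 'C_M[c | 'P], on neighbourhood adj c | 'P].
End Defs.

Section GroupDefs.
Variable gT : finGroupType.

Definition minimal_normal (N X : {set gT}) := minnormal N X && (N \subset X).

Definition socle_grp (X : {set gT}) : {set gT} :=
  <<\bigcup_(N : {group gT} | minimal_normal N X) N>>.

End GroupDefs.

Definition quasiprimitive_on_orbits (V : finType) (X : {set {perm V}}) :=
  forall (N : {group {perm V}}), minimal_normal N X ->
    forall a : V, [transitive N, on orbit 'P X a | 'P].

(* i-th coordinate projection for a direct decomposition M = T_0 x ... x T_(n-1) *)
Definition proj_coord (gT : finGroupType) (n : nat) (T : 'I_n -> {group gT})
    (i : 'I_n) (x : gT) : gT :=
  divgr (T i) (\prod_(j < n | j != i) T j) x.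

(* Main.v *)
Require Import Defs.
From mathcomp Require Import all_boot all_fingroup all_solvable.
Set Implicit Arguments. Unset Strict Implicit. Unset Printing Implicit Defensive.
Local Open Scope group_scope.

Section GenLemmas.
Variable gT : finGroupType.

Lemma Lsimp (M A B : {group gT}) : A <| M -> B <| M -> simple A -> simple B ->
  A :=: B \/ A \subset 'C(B).
Proof.
move=> nAM nBM sA sB.
have nAB : B \subset 'N(A) by apply: subset_trans (normal_norm nAM); apply: normal_sub.
have nBA : A \subset 'N(B) by apply: subset_trans (normal_norm nBM); apply: normal_sub.
have nI : (A :&: B)%G <| B.
  by rewrite /normal subsetIr normsI ?normG.
case/simpleP: sB => ntB /(_ _ nI) [] /= HI.
  right; apply/commG1P/trivgP; rewrite -HI.
  by apply: commg_subI; rewrite subsetI ?subxx ?nAB ?nBA.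
left.
have sBA : B \subset A by rewrite -HI subsetIl.
have nBA' : B <| A by rewrite /normal sBA nBA.
case/simpleP: sA => _ /(_ _ nBA') [] HB.
  by rewrite HB eqxx in ntB.
by rewrite HB.
Qed.

Lemma simple_center1 (T : {group gT}) : simple T -> ~~ abelian T -> 'Z(T) = 1.
Proof.
case/simpleP=> _ /(_ _ (center_normal T)) [] // HZ nab.
by rewrite /abelian -{1}HZ subsetIr in nab.
Qed.

End GenLemmas.
Section Graph.
Variables (V : finType) (adj : rel V) (G : {group {perm V}}).
Hypotheses (Hsg : simple_graph adj) (Hval : valency_ge adj 3)
  (Haut : automorphisms adj G) (H2 : two_arc_transitive adj G).

Lemma adj_neq b c : adj b c -> b != c.
Proof. by case: Hsg => _ irr; apply: contraTneq => ->; rewrite irr. Qed.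

Lemma adj_sym b c : adj b c -> adj c b.
Proof. by case: Hsg => sym _; rewrite sym. Qed.

Lemma nb_other b c : exists2 w, adj b w & w != c.
Proof.
have := Hval b; rewrite (cardsD1 c) => H.
have : 0 < #|neighbourhood adj b :\ c|.
  by move: H; case: (c \in _); case: #|_|.
rewrite card_gt0 => /set0Pn [w]; rewrite !inE => /andP [wc bw].
by exists w.
Qed.

Lemma trans_pair b c y : adj b c -> adj b y ->
  exists2 k, k \in G & k b = b /\ k c = y.
Proof.
move=> bc by_.
have [w1 bw1 w1c] := nb_other b c.
have [w2 bw2 w2y] := nb_other b y.
have HA : two_arc adj (c, b, w1).
  split => //=; [exact: adj_sym | rewrite eq_sym; exact: adj_neq | exact: adj_neq| by rewrite eq_sym].
have HB : two_arc adj (y, b, w2).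
  split => //=; [exact: adj_sym | rewrite eq_sym; exact: adj_neq | exact: adj_neq| by rewrite eq_sym].
by case: (H2 HA HB) => g Gg [/= e1 e2 _]; exists g.
Qed.

Lemma swap_edge b c : adj b c -> exists2 g, g \in G & g b = c /\ g c = b.
Proof.
move=> bc.
have [w cw wb] := nb_other c b.
have [w' bw' w'c] := nb_other b c.
have HA : two_arc adj (b, c, w).
  split => //=; [exact: adj_neq | exact: adj_neq| by rewrite eq_sym].
have HB : two_arc adj (c, b, w').
  split => //=; [exact: adj_sym | rewrite eq_sym; exact: adj_neq | exact: adj_neq| by rewrite eq_sym].
by case: (H2 HA HB) => g Gg [/= e1 e2 _]; exists g.
Qed.

Lemma aut_adj g x y : g \in G -> adj (g x) (g y) = adj x y.
Proof. by move=> Gg; apply: Haut. Qed.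

Lemma nbJ g x : g \in G ->
  setact 'P (neighbourhood adj x) g = neighbourhood adj (g x).
Proof.
move=> Gg; apply/setP=> y; rewrite /= setactE.
apply/imsetP/idP => [[z] | ].
  by rewrite !inE => xz ->; rewrite /= aut_adj.
rewrite inE => H; exists ((g^-1)%g y); last by rewrite /= apermE permKV.
by rewrite inE -(aut_adj x _ Gg) permKV.
Qed.

End Graph.
Section Decomp.
Variables (gT : finGroupType) (M : {group gT}) (n : nat) (T : 'I_n -> {group gT}).
Hypothesis HdM : \big[dprod/1]_(i < n) T i = M.

Definition Lset i := \prod_(j < n | j != i) T j.

Lemma decomp i : exists2 L : {group gT}, Lset i = L & T i \x L = M.
Proof.
move: HdM; rewrite (bigD1 i) //= => defM.
have [[K H defK defH] _ _ _] := dprodP defM.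
exists H; last by rewrite -defH.
exact: (bigdprodW defH).
Qed.

Lemma Lgroup i : group_set (Lset i).
Proof. by have [L -> _] := decomp i; apply: groupP. Qed.

Canonical Lset_group i := Group (Lgroup i).

Lemma TLdprod i : T i \x Lset i = M.
Proof. by have [L -> ] := decomp i. Qed.

Lemma proj_TL i t l : t \in T i -> l \in Lset i -> proj_coord T i (t * l) = t.
Proof.
move=> Tt Ll; rewrite /proj_coord (@divgrMid _ _ (Lset_group i)) //.
by have [_ _ _ ->] := dprodP (TLdprod i).
Qed.

Lemma proj_id i t : t \in T i -> proj_coord T i t = t.
Proof. by move=> Tt; rewrite /proj_coord (@divgr_id _ _ (Lset_group i)). Qed.

Lemma mem_TL i x : x \in M -> exists t, exists l, [/\ t \in T i, l \in Lset i & x = t * l].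
Proof.
have [_ defM _ _] := dprodP (TLdprod i).
by rewrite -defM => /mulsgP [t l Tt Ll ->]; exists t, l.
Qed.

Lemma proj_morph i : {in M &, {morph proj_coord T i : x y / x * y}}.
Proof.
have [_ defM cTL tiTL] := dprodP (TLdprod i).
rewrite /proj_coord; apply: (@divgrM _ _ (Lset_group i)) => //.
by apply/complP.
Qed.

Lemma proj_in i x : x \in M -> proj_coord T i x \in T i.
Proof. by case/(mem_TL i) => t [l [Tt Ll ->]]; rewrite proj_TL. Qed.

Lemma proj_ker i x : x \in M -> (proj_coord T i x == 1) = (x \in Lset i).
Proof.
case/(mem_TL i) => t [l [Tt Ll ->]]; rewrite proj_TL //.
have [_ _ _ tiTL] := dprodP (TLdprod i).
apply/eqP/idP => [-> | ]; first by rewrite mul1g.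
rewrite groupMr // => Lt; apply/set1gP; rewrite -tiTL inE Tt.
done.
Qed.

Lemma Tnormal i : T i <| M.
Proof. by have [] := dprod_normal2 (TLdprod i). Qed.

Lemma Lnormal i : Lset i <| M.
Proof. by have [] := dprod_normal2 (TLdprod i). Qed.

Lemma LsetC i : simple (T i) -> ~~ abelian (T i) -> Lset i = 'C_M(T i).
Proof.
move=> sT nab.
have [_ defM cTL tiTL] := dprodP (TLdprod i).
apply/eqP; rewrite eqEsubset subsetI normal_sub ?Lnormal //= cTL /=.
apply/subsetP => x /setIP [Mx cx].
have [t [l [Tt Ll ex]]] := mem_TL i Mx.
have ct : t \in 'C(T i).
  have -> : t = x * l^-1 by rewrite ex mulgK.
  by rewrite groupM ?groupV //; apply: (subsetP cTL).
have : t \in 'Z(T i) by rewrite inE Tt.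
have Z1 : 'Z(T i) = 1.
  case/simpleP: sT => _ /(_ _ (center_normal (T i))) [] // HZ.
  by rewrite /abelian -{1}HZ subsetIr in nab.
by rewrite Z1 => /set1gP t1; rewrite ex t1 mul1g.
Qed.

End Decomp.
Section Main.
Variables (V : finType) (adj : rel V) (G : {group {perm V}})
    (a1 a2 : V) (Gs M : {group {perm V}}) (n : nat)
    (T : 'I_n -> {group {perm V}}) (R : V -> 'I_n -> {group {perm V}}).
Hypotheses (Hsg : simple_graph adj) (Hconn : connected_graph adj) (Hval : valency_ge adj 3)
  (Haut : automorphisms adj G) (H2 : two_arc_transitive adj G) (Ha12 : adj a1 a2)
  (HGs : Gs :=: <<'C_G[a1 | 'P] :|: 'C_G[a2 | 'P]>>)
  (HqP : quasiprimitive_on_orbits Gs) (HmnM : minimal_normal M Gs)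
  (Huniq : forall N : {group {perm V}}, minimal_normal N Gs -> N :=: M)
  (HdM : \big[dprod/1]_(i < n) T i = M)
  (HT : forall i, simple (T i) /\ ~~ abelian (T i))
  (Hprop : forall a i, R a i \proper T i)
  (HR : forall a i, proj_coord T i @: 'C_M[a | 'P] = R a i)
  (Hlp : locally_primitive adj M).

Lemma GsG : Gs \subset G.
Proof. by rewrite HGs gen_subG subUset !subsetIl. Qed.

Lemma MGs : M \subset Gs.
Proof. by case/andP: HmnM. Qed.

Lemma MG : M \subset G.
Proof. exact: subset_trans MGs GsG. Qed.

Lemma minM : (M :!=: 1) && (Gs \subset 'N(M)) /\
  forall H : {group {perm V}}, (H :!=: 1) && (Gs \subset 'N(H)) -> H \subset M -> H :=: M.
Proof. by case/andP: HmnM => /mingroupP. Qed.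

Lemma nMGs : Gs \subset 'N(M).
Proof. by case: minM => /andP []. Qed.

Lemma ntM : M :!=: 1.
Proof. by case: minM => /andP []. Qed.

Lemma TJnormal i h : h \in 'N(M) -> T i :^ h <| M.
Proof. by move=> /normP hN; rewrite -hN normalJ (Tnormal HdM). Qed.

Lemma TJsimple i h : simple (T i :^ h).
Proof. by rewrite -(isog_simple (conj_isog (T i) h)); case: (HT i). Qed.

Lemma nMT i h : h \in 'N(M) -> exists k, T i :^ h = T k.
Proof.
move=> hN.
case: (pickP (fun k => T i :^ h == T k)) => [k /eqP e | none]; first by exists k.
exfalso.
have cA : forall k, T i :^ h \subset 'C(T k).
  move=> k; case: (@Lsimp _ M (T i :^ h)%G (T k) (TJnormal i hN) (Tnormal HdM k)
     (TJsimple i h) (proj1 (HT k))) => // e.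
  by move: (none k); rewrite /= e eqxx.
have cM : T i :^ h \subset 'C(M).
  rewrite -(bigdprodWY HdM) cent_gen centsC; apply/bigcupsP => k _.
  by rewrite centsC.
have : abelian (T i :^ h).
  rewrite /abelian; apply: subset_trans cM _; apply: centS.
  exact: normal_sub (TJnormal i hN).
by rewrite abelianJ; case: (HT i) => _ /negP.
Qed.

Lemma Gs_trans_T i j : exists2 h, h \in Gs & T i :^ h = T j.
Proof.
case: (pickP (fun h => (h \in Gs) && (T i :^ h == T j))) => [h /andP [Gh /eqP e] | none].
  by exists h.
exfalso.
pose N := <<class_support (T i) Gs>>%G.
have sNM : N \subset M.
  by rewrite gen_subG class_support_sub_norm ?nMGs ?normal_sub ?(Tnormal HdM).
have nNGs : Gs \subset 'N(N) by apply: subset_trans (class_support_norm _ _) (norm_gen _).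
have sTN : T i \subset N by apply: subset_trans (sub_class_support _ _) (subset_gen _).
have ntN : N :!=: 1.
  apply: contraNneq (proj1 (simpleP _ (proj1 (HT i)))) => N1.
  by apply/eqP/trivgP; rewrite -N1.
have eNM : N :=: M by case: minM => _; apply => //; rewrite ntN nNGs.
have cN : N \subset 'C(T j).
  rewrite gen_subG class_supportEr; apply/bigcupsP => h Gh.
  have hN : h \in 'N(M) by apply: (subsetP nMGs).
  case: (@Lsimp _ M (T i :^ h)%G (T j) (TJnormal i hN) (Tnormal HdM j)
     (TJsimple i h) (proj1 (HT j))) => // e.
  by move: (none h); rewrite Gh /= e eqxx.
have : abelian (T j).
  rewrite /abelian; apply: subset_trans cN; rewrite eNM.
  exact: normal_sub (Tnormal HdM j).
by case: (HT j) => _ /negP.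
Qed.


Lemma atransJ (A : {group {perm V}}) S g :
  [transitive A, on S | 'P] -> [transitive A :^ g, on setact 'P S g | 'P].
Proof.
case/imsetP => y Sy ->; apply/imsetP; exists (aperm y g).
  by rewrite setact_orbit; apply: orbit_refl.
by rewrite setact_orbit.
Qed.

Definition PP x (A : {set {perm V}}) :=
  [transitive 'C_M[x | 'P] :&: 'C_M(A), on neighbourhood adj x | 'P].

Lemma PP_J x A g : g \in G -> g \in 'N(M) -> PP x A -> PP (g x) (A :^ g).
Proof.
move=> Gg gN; rewrite /PP => /(atransJ g).
have e1 : 'C_M[x | 'P] :^ g = 'C_M[g x | 'P].
  by rewrite conjIg (normP gN) -(astab1_act 'P).
have e2 : 'C_M(A) :^ g = 'C_M(A :^ g) by rewrite conjIg (normP gN) centJ.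
by rewrite (nbJ Haut) // conjIg e1 e2.
Qed.

Lemma PP_conjT x i g : g \in G -> g \in 'N(M) -> PP x (T i) ->
  exists k, PP (g x) (T k).
Proof.
move=> Gg gN /(PP_J Gg gN); have [k ->] := nMT i gN.
by exists k.
Qed.

Lemma PP_vertex x i j : PP x (T i) -> PP x (T j).
Proof.
move=> Pxi.
have [h0 Gsh0 e0] := Gs_trans_T i j.
have trM := HqP HmnM x.
have [m Mm em] := atransP2 trM (orbit_refl _ _ _) (mem_orbit 'P x Gsh0).
pose h := h0 * m^-1.
have em' : h0 x = m x := em.
have hx : h x = x by rewrite permM em' permK.
have Gh : h \in G.
  by apply: groupM; [exact: (subsetP GsG) | rewrite groupV; exact: (subsetP MG)].
have hN : h \in 'N(M).
  by apply: groupM; [exact: (subsetP nMGs) | rewrite groupV; exact: (subsetP (normG M))].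
have := PP_J Gh hN Pxi.
rewrite hx /h conjsgM e0 (normP _) //.
by rewrite groupV (subsetP (normal_norm (Tnormal HdM j))).
Qed.

Lemma orbit_closed e y z : (e = a1 \/ e = a2) ->
  (y \in orbit 'P Gs a1) || (y \in orbit 'P Gs a2) -> adj y z ->
  (z \in orbit 'P Gs a1) || (z \in orbit 'P Gs a2).
Proof.
move=> _ /orP Hy yz.
have key : forall b c y', adj b c -> ('C_G[b | 'P] \subset Gs) ->
    y' \in orbit 'P Gs b -> adj y' z -> z \in orbit 'P Gs c.
  move=> b c y' bc sGs /orbitP [h Gsh <-] yz'.
  have Gh : h \in G by apply: (subsetP GsG).
  have bz : adj b (h^-1 z).
    by rewrite -(aut_adj Haut _ _ Gh) permKV.
  have [k Gk [kb kc]] := trans_pair Hsg Hval H2 bc bz.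
  apply/orbitP; exists (k * h).
    rewrite groupM // (subsetP sGs) // inE Gk; apply/astab1P.
    exact: kb.
  by rewrite /= apermE permM kc permKV.
case: Hy => Hy.
  apply/orP; right; apply: (key a1 a2 y) => //.
  by rewrite HGs; apply: subset_trans (subset_gen _); apply: subsetUl.
apply/orP; left; apply: (key a2 a1 y) => //; first exact: (adj_sym Hsg).
by rewrite HGs; apply: subset_trans (subset_gen _); apply: subsetUr.
Qed.

Lemma cover x : (x \in orbit 'P Gs a1) || (x \in orbit 'P Gs a2).
Proof.
have /connectP [p pth ->] := Hconn a1 x.
have gen : forall p b, (b \in orbit 'P Gs a1) || (b \in orbit 'P Gs a2) ->
    path adj b p -> (last b p \in orbit 'P Gs a1) || (last b p \in orbit 'P Gs a2).
  elim => //= z q IH b Qb /andP [bz pz].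
  exact: (IH z (orbit_closed (or_introl erefl) Qb bz) pz).
by apply: gen pth; rewrite orbit_refl.
Qed.


Lemma swap_g : exists2 g, g \in G & [/\ g a1 = a2, g a2 = a1 & g \in 'N(M)].
Proof.
have [g Gg [g1 g2]] := swap_edge Hsg Hval H2 Ha12.
exists g => //; split => //.
have e1 : 'C_G[a1 | 'P] :^ g = 'C_G[a2 | 'P].
  by rewrite conjIg (conjGid Gg) -(astab1_act 'P) /= apermE g1.
have e2 : 'C_G[a2 | 'P] :^ g = 'C_G[a1 | 'P].
  by rewrite conjIg (conjGid Gg) -(astab1_act 'P) /= apermE g2.
have eGs : Gs :^ g = Gs by rewrite HGs -genJ conjUg e1 e2 setUC.
have eGs' : Gs :^ g^-1 = Gs by rewrite -{1}eGs conjsgK.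
suff mn : minimal_normal (M :^ g)%G Gs by apply/normP; exact: (Huniq mn).
apply/andP; split; last by rewrite /= -eGs conjSg MGs.
apply/mingroupP; split.
  by rewrite /= conjsg_eq1 ntM /= normJ -eGs conjSg nMGs.
move=> H /andP [ntH nH] sH.
have eH : (H :^ g^-1)%G :=: M.
  case: minM => _; apply; last by rewrite /= sub_conjgV.
  by rewrite /= conjsg_eq1 ntH /= normJ -eGs' conjSg.
by have := congr1 (fun A => A :^ g) eH; rewrite /= conjsgKV => ->.
Qed.

Lemma toBase x i e : x \in orbit 'P Gs e -> PP x (T i) -> exists k, PP e (T k).
Proof.
move=> /orbitP [h Gsh <-] P.
have Gh : h^-1 \in G by rewrite groupV; apply: (subsetP GsG).
have hN : h^-1 \in 'N(M) by rewrite groupV; apply: (subsetP nMGs).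
have [k Pk] := PP_conjT Gh hN P.
by exists k; move: Pk; rewrite /= apermE permK.
Qed.

Lemma fromBase e k y j : y \in orbit 'P Gs e -> PP e (T k) -> PP y (T j).
Proof.
move=> /orbitP [h Gsh <-] P.
have Gh : h \in G by apply: (subsetP GsG).
have hN : h \in 'N(M) by apply: (subsetP nMGs).
have [k' Pk] := PP_conjT Gh hN P.
exact: PP_vertex Pk.
Qed.

Lemma all_PP x i y j : PP x (T i) -> PP y (T j).
Proof.
move=> P.
have [g Gg [g1 g2 gN]] := swap_g.
have s12 : forall k, PP a1 (T k) -> exists k', PP a2 (T k').
  by move=> k Pk; have := PP_conjT Gg gN Pk; rewrite g1.
have s21 : forall k, PP a2 (T k) -> exists k', PP a1 (T k').
  by move=> k Pk; have := PP_conjT Gg gN Pk; rewrite g2.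
have [k1 P1] : exists k, PP a1 (T k).
  case/orP: (cover x) => Hx; have [k Pk] := toBase Hx P; first by exists k.
  exact: s21 Pk.
have [k2 P2] := s12 _ P1.
case/orP: (cover y) => Hy.
  exact: fromBase Hy P1.
exact: fromBase Hy P2.
Qed.


Lemma connect_const (X : Type) (f : V -> X) :
  (forall x y, adj x y -> f x = f y) -> forall x, f x = f a1.
Proof.
move=> H x; have /connectP [p pth ->] := Hconn a1 x.
elim: p a1 pth => //= z q IH b /andP [bz pz].
by rewrite IH // -(H _ _ bz).
Qed.

Lemma dich x i : ('C_M[x | 'P] :&: 'C_M(T i) \subset 'C(neighbourhood adj x | 'P))
   \/ PP x (T i).
Proof.
have nK : ('C_M[x | 'P] :&: 'C_M(T i))%G <| 'C_M[x | 'P].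
  rewrite /normal subsetIl /= normsI ?normG //.
  apply: subset_trans (subsetIl _ _) _.
  by rewrite -(LsetC HdM) ?(proj1 (HT i)) ?(proj2 (HT i)) // normal_norm ?(Lnormal HdM).
case: (prim_trans_norm (Hlp x) nK) => [H|]; last by right.
by left; apply: subset_trans H (subsetIr _ _).
Qed.

Lemma Kin_L x i u : u \in 'C_M[x | 'P] :&: 'C_M(T i) -> u \in Lset T i.
Proof.
by rewrite (LsetC HdM) ?(proj1 (HT i)) ?(proj2 (HT i)) // => /setIP [].
Qed.

Lemma case_triv i a : (forall x, ~~ PP x (T i)) ->
  'C_M[a | 'P] :&: 'C_M(T i) = 1.
Proof.
move=> nP.
have triv x : 'C_M[x | 'P] :&: 'C_M(T i) \subset 'C(neighbourhood adj x | 'P).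
  by case: (dich x i) => // P; move: (nP x); rewrite P.
have sub x y : adj x y -> 'C_M[x | 'P] :&: 'C_M(T i) \subset 'C_M[y | 'P] :&: 'C_M(T i).
  move=> xy; apply/subsetP => u Ku.
  have [/setIP [Mu _] CTu] := setIP Ku.
  have uy : u y = y.
    by have := astabP (subsetP (triv x) u Ku) y; rewrite inE xy; apply.
  by rewrite inE CTu andbT inE Mu /=; apply/astab1P.
have eq x : 'C_M[x | 'P] :&: 'C_M(T i) = 'C_M[a1 | 'P] :&: 'C_M(T i).
  have H : forall y z, adj y z -> 'C_M[y | 'P] :&: 'C_M(T i) = 'C_M[z | 'P] :&: 'C_M(T i).
    by move=> y z yz; apply/eqP; rewrite eqEsubset !sub // (adj_sym Hsg).
  exact: (@connect_const _ (fun x => 'C_M[x | 'P] :&: 'C_M(T i)) H x).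
apply/trivgP/subsetP => u Ku; apply/set1gP/permP => z; rewrite perm1.
have : u \in 'C_M[z | 'P] :&: 'C_M(T i) by rewrite eq -(eq a).
by case/setIP => /setIP [_ /astab1P].
Qed.

Lemma nb_card x (A : {group {perm V}}) : [transitive A, on neighbourhood adj x | 'P] ->
  3 <= #|A|.
Proof.
move=> tr.
have [y xy] : exists y, adj x y.
  by have [w xw _] := nb_other Hval x x; exists w.
have Sy : y \in neighbourhood adj x by rewrite inE.
apply: leq_trans (Hval x) _.
by rewrite -(atransP tr y Sy) orbitE leq_imset_card.
Qed.

Lemma case_trans i : (forall x, PP x (T i)) -> False.
Proof.
move=> P.
pose pi := proj_coord T i.
have sR x y : adj x y -> R x i \subset R y i.
  move=> xy; rewrite -!HR; apply/subsetP => _ /imsetP [m Cm ->].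
  have [Mm /astab1P mx] := setIP Cm.
  have Gm : m \in G by apply: (subsetP MG).
  have Sy : y \in neighbourhood adj x by rewrite inE.
  have Smy : m y \in neighbourhood adj x.
    by rewrite inE -{1}mx /= apermE (aut_adj Haut _ _ Gm).
  have [k Kk ek] := atransP2 (P x) Sy Smy.
  have [/setIP [Mk _] _] := setIP Kk.
  have e1 : m = (m * k^-1) * k by rewrite mulgKV.
  have Cm' : m * k^-1 \in 'C_M[y | 'P].
    rewrite inE groupM ?groupV //=; apply/astab1P.
    by rewrite /= apermE permM ek /= apermE permK.
  rewrite e1 /pi (proj_morph HdM) ?groupM ?groupV //.
  have -> : proj_coord T i k = 1.
    by apply/eqP; rewrite (proj_ker HdM) // (Kin_L Kk).
  by rewrite mulg1 imset_f.
have eR x : R x i = R a1 i :> {set _}.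
  have H : forall y z, adj y z -> (R y i : {set _}) = R z i.
    by move=> y z yz; apply/eqP; rewrite eqEsubset !sR // (adj_sym Hsg).
  exact: (@connect_const _ (fun x => (R x i : {set _})) H x).
pose N := <<\bigcup_(x : V) 'C_M[x | 'P]>>%G.
have sNM : N \subset M by rewrite gen_subG; apply/bigcupsP => x _; apply: subsetIl.
have nNGs : Gs \subset 'N(N).
  apply: subset_trans (norm_gen _); apply/subsetP => h Gsh.
  have hN : h \in 'N(M) by apply: (subsetP nMGs).
  rewrite inE; apply/subsetP => u; rewrite mem_conjg => /bigcupP [x _ ux].
  have : u \in 'C_M[x | 'P] :^ h by rewrite mem_conjg.
  rewrite conjIg (normP hN) -(astab1_act 'P) => uh.
  by apply/bigcupP; exists ('P%act x h).
have ntN : N :!=: 1.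
  apply/eqP => N1.
  have := nb_card (P a1).
  have : #|'C_M[a1 | 'P] :&: 'C_M(T i)| <= #|N|.
    apply: subset_leq_card; apply: subset_trans (subsetIl _ _) _.
    by apply: subset_trans (subset_gen _); apply: (bigcup_max a1).
  by rewrite N1 cards1 => H1 H3; move: (leq_trans H3 H1).
have eNM : N :=: M by case: minM => _; apply => //; rewrite ntN nNGs.
pose f := @Morphism _ _ M pi (proj_morph HdM i).
have sNQ : N \subset f @*^-1 (R a1 i).
  rewrite gen_subG; apply/bigcupsP => x _; apply/subsetP => u Cu.
  have Mu : u \in M by case/setIP: Cu.
  by rewrite mem_morphpre //= -(eR x) -HR imset_f.
have sMQ : M \subset f @*^-1 (R a1 i).
  by apply/subsetP => u Mu; apply: (subsetP sNQ); rewrite eNM.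
have sTR : T i \subset R a1 i.
  apply/subsetP => t Tt.
  have Mt : t \in M by apply: (subsetP (normal_sub (Tnormal HdM i))).
  have := subsetP sMQ t Mt; case/morphpreP => _ /=; rewrite /pi (proj_id HdM) //.
by move: (Hprop a1 i); rewrite properE sTR andbF.
Qed.


Lemma final a i : {in 'C_M[a | 'P] &, injective (proj_coord T i)} /\
    'C_M[a | 'P] \isog R a i.
Proof.
have K1 : 'C_M[a | 'P] :&: 'C_M(T i) = 1.
  apply: case_triv => x; apply/negP => Px.
  by apply: (case_trans (i := i)) => y; apply: all_PP Px.
pose f := @Morphism _ _ M (proj_coord T i) (proj_morph HdM i).
have sCM : 'C_M[a | 'P] \subset M := subsetIl _ _.
pose g := restrm sCM f.
have injg : 'injm g.
  rewrite ker_restrm; apply/subsetP => u /setIP [Cu].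
  rewrite kerE => /morphpreP [Mu /set1gP /= e].
  have Lu : u \in Lset T i by rewrite -(proj_ker HdM) // e.
  rewrite -K1 inE Cu /=.
  by move: Lu; rewrite (LsetC HdM) ?(proj1 (HT i)) ?(proj2 (HT i)).
split; first exact: (injmP injg).
apply/isogP; exists g => //.
by rewrite morphim_restrm setIid morphimEsub // HR.
Qed.
End Main.

Unset Implicit Arguments.

Theorem lemma4p2 (V : finType) (adj : rel V) (G : {group {perm V}})
    (a1 a2 : V) (Gs M : {group {perm V}}) (n : nat)
    (T : 'I_n -> {group {perm V}}) (R : V -> 'I_n -> {group {perm V}}) :
  simple_graph adj -> connected_graph adj -> valency_ge adj 3 ->
  automorphisms adj G -> two_arc_transitive adj G ->
  adj a1 a2 ->
  Gs :=: <<'C_G[a1 | 'P] :|: 'C_G[a2 | 'P]>> ->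
  M :=: socle_grp Gs ->
  (* G* quasiprimitive of PA type on each of its orbits: *)
  quasiprimitive_on_orbits Gs ->
  minimal_normal M Gs ->
  (forall N : {group {perm V}}, minimal_normal N Gs -> N :=: M) ->
  (2 <= n)%N ->
  \big[dprod/1]_(i < n) T i = M ->
  (forall i, simple (T i) /\ ~~ abelian (T i)) ->
  (forall i j, T i \isog T j) ->
  (forall a i, R a i \proper T i) ->
  (forall a, 'C_M[a | 'P] \subset \prod_(i < n) R a i) ->
  (forall a i, proj_coord T i @: 'C_M[a | 'P] = R a i) ->
  locally_primitive adj M ->
  forall (a : V) (i : 'I_n),
    {in 'C_M[a | 'P] &, injective (proj_coord T i)} /\
    'C_M[a | 'P] \isog R a i.
Proof.
move=> Hsg Hconn Hval Haut H2 Ha12 HGs Hsoc HqP HmnM Huniq Hn HdM HT Hiso Hprop HsubR HR Hlp a i.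
by eapply final; eassumption.
Qed.
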